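(* Let $(X,\rho)$ be a metric space, $A\in CL(X)$ and $(A_k)\subset CL(X)$. Suppose that $f\colon[0,\infty)\to[0,\infty)$ is an unbounded modulus such that $\lim_{t\to\infty}\frac{f(t)}{t}>0$ and there is $c\in(0,\infty)$ with $f(xy)\ge c\,f(x)\,f(y)$ for all $x,y\in[0,\infty)$. Then: (i) if $(A_k)$ is Wijsman strongly Cesàro summable to $A$ with respect to $f$, then $(A_k)$ is $f$-Wijsman statistically convergent to $A$; (ii) if $(A_k)$ is Wijsman bounded and $f$-Wijsman statistically convergent to $A$, then $(A_k)$ is Wijsman strongly Cesàro summable to $A$ with respect to $f$.
   Context: A modulus is a function $f\colon[0,\infty)\to[0,\infty)$ such that $f(x)=0$ iff $x=0$, $f$ is subadditive, increasing and continuous. $CL(X)$ denotes the set of all non-empty closed subsets of $(X,\rho)$, and $d(x,B)=\inf_{y\in B}\rho(x,y)$. $(A_k)$ is Wijsman bounded if $\sup_k d(x,A_k)<\infty$ for each $x\in X$. For an unbounded modulus $f$ and $K\subseteq\mathbb N$, the $f$-density is $d^f(K)=\lim_{n\to\infty}\frac{f(|\{k\le n:k\in K\}|)}{f(n)}$ (when the limit exists). $(A_k)$ is $f$-Wijsman statistically convergent to $A$ if for every $x\in X$ and every $\varepsilon>0$ the set $\{k:|d(x,A_k)-d(x,A)|\ge\varepsilon\}$ has $f$-density $0$. $(A_k)$ is Wijsman strongly Cesàro summable to $A$ with respect to $f$ if $\lim_{n\to\infty}\frac1n\sum_{k=1}^n f(|d(x,A_k)-d(x,A)|)=0$ for every $x\in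 X$. *)

(* Defs.v *)
From Stdlib Require Import Reals ClassicalEpsilon.
From Coquelicot Require Import Coquelicot.
Open Scope R_scope.

Definition is_metric {X : Type} (rho : X -> X -> R) : Prop :=
  (forall x y, 0 <= rho x y) /\
  (forall x y, rho x y = 0 <-> x = y) /\
  (forall x y, rho x y = rho y x) /\
  (forall x y z, rho x z <= rho x y + rho y z).

Definition closed_set {X : Type} (rho : X -> X -> R) (B : X -> Prop) : Prop :=
  forall x, (forall eps, 0 < eps -> exists y, B y /\ rho x y < eps) -> B x.

Definition CL {X : Type} (rho : X -> X -> R) (B : X -> Prop) : Prop :=
  (exists y, B y) /\ closed_set rho B.

(* d(x,B) = inf_{y in B} rho(x,y)  (finite for non-empty B, as rho >= 0). *)
Definition dist_set {X : Type} (rho : X -> X -> R) (x : X) (B : X -> Prop) : R :=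
  real (Glb_Rbar (fun r => exists y, B y /\ r = rho x y)).

Definition modulus (f : R -> R) : Prop :=
  (forall x, 0 <= x -> 0 <= f x) /\
  (forall x, 0 <= x -> (f x = 0 <-> x = 0)) /\
  (forall x y, 0 <= x -> 0 <= y -> f (x + y) <= f x + f y) /\
  (forall x y, 0 <= x -> x <= y -> f x <= f y) /\
  (forall x, 0 <= x -> continuous (fun t => f (Rabs t)) x).

Definition unbounded_fun (f : R -> R) : Prop :=
  forall M, exists x, 0 <= x /\ M < f x.

(* |{k <= n : k in K}|, with k ranging over 1..n. *)
Fixpoint count_upto (K : nat -> Prop) (n : nat) : nat :=
  match n with
  | O => O
  | S m => (if excluded_middle_informative (K (S m)) then 1 else 0)%nat
           + count_upto K m
  end.

Definition f_density_zero (f : R -> R) (K : nat -> Prop) : Prop :=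
  is_lim_seq (fun n => f (INR (count_upto K n)) / f (INR n)) 0.

Definition wijsman_bounded {X : Type} (rho : X -> X -> R) (A_ : nat -> X -> Prop) : Prop :=
  forall x, exists M, forall k, (1 <= k)%nat -> dist_set rho x (A_ k) <= M.

Definition f_wijsman_stat_conv {X : Type} (rho : X -> X -> R) (f : R -> R)
  (A_ : nat -> X -> Prop) (A : X -> Prop) : Prop :=
  forall x eps, 0 < eps ->
    f_density_zero f
      (fun k => eps <= Rabs (dist_set rho x (A_ k) - dist_set rho x A)).

Definition wijsman_strong_cesaro {X : Type} (rho : X -> X -> R) (f : R -> R)
  (A_ : nat -> X -> Prop) (A : X -> Prop) : Prop :=
  forall x,
    is_lim_seq (fun n => / INR n *
      sum_n_m (fun k => f (Rabs (dist_set rho x (A_ k) - dist_set rho x A))) 1 n) 0.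

(* Main.v *)
Require Import Defs.
From Stdlib Require Import Reals Lra Lia Psatz ClassicalEpsilon.
From Coquelicot Require Import Coquelicot.
Open Scope R_scope.

Lemma lim0_spec (u : nat -> R) :
  is_lim_seq u 0 <-> forall eps, 0 < eps -> exists N, forall n, (N <= n)%nat -> Rabs (u n) < eps.
Proof.
  split.
  - intros H eps Heps. apply is_lim_seq_spec in H. destruct (H (mkposreal eps Heps)) as [N HN].
    exists N. intros n Hn. specialize (HN n Hn). simpl in HN. rewrite Rminus_0_r in HN. exact HN.
  - intros H. apply is_lim_seq_spec. intros eps. destruct (H eps (cond_pos eps)) as [N HN].
    exists N. intros n Hn. rewrite Rminus_0_r. auto.
Qed.

Lemma mod_zero f : modulus f -> f 0 = 0.
Proof. intros (_&H&_). apply (H 0); lra. Qed.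

Lemma mod_nonneg f x : modulus f -> 0 <= x -> 0 <= f x.
Proof. intros (H&_) Hx. auto. Qed.

Lemma mod_mono f x y : modulus f -> 0 <= x -> x <= y -> f x <= f y.
Proof. intros (_&_&_&H&_). auto. Qed.

Lemma mod_pos f x : modulus f -> 0 < x -> 0 < f x.
Proof.
  intros Hm Hx. pose proof Hm as (H0&H1&_).
  assert (f x <> 0) by (intro E; apply (H1 x ltac:(lra)) in E; lra).
  pose proof (H0 x ltac:(lra)). lra.
Qed.

Lemma mod_nat f : modulus f -> forall m, f (INR m) <= INR m * f 1.
Proof.
  intros Hm. pose proof Hm as (_&_&Hs&_). induction m.
  - simpl. rewrite (mod_zero f Hm). lra.
  - rewrite S_INR. pose proof (Hs (INR m) 1 (pos_INR m) ltac:(lra)). lra.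
Qed.

Lemma cnt_le K n : (count_upto K n <= n)%nat.
Proof. induction n; simpl; [lia|]. destruct (excluded_middle_informative _); lia. Qed.

Fixpoint ps (g : nat -> R) n := match n with O => 0 | S m => ps g m + g (S m) end.

Lemma ps_eq g n : sum_n_m g 1 n = ps g n.
Proof.
  induction n.
  - rewrite sum_n_m_zero; [reflexivity|lia].
  - rewrite sum_n_Sm; [|lia]. rewrite IHn. reflexivity.
Qed.

Lemma ps_lower g K a n : 0 <= a -> (forall k, (1<=k)%nat -> 0 <= g k) ->
  (forall k, (1<=k)%nat -> K k -> a <= g k) ->
  a * INR (count_upto K n) <= ps g n.
Proof.
  intros Ha Hg HK. induction n; simpl. lra.
  destruct (excluded_middle_informative (K (S n))) as [h|h].
  - rewrite plus_INR. simpl (INR 1). specialize (HK (S n) ltac:(lia) h). lra.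
  - rewrite Nat.add_0_l. specialize (Hg (S n) ltac:(lia)). lra.
Qed.

Lemma ps_upper g K B e n : 0 <= e -> (forall k, (1<=k)%nat -> g k <= B) ->
  (forall k, (1<=k)%nat -> ~ K k -> g k <= e) ->
  ps g n <= B * INR (count_upto K n) + e * INR n.
Proof.
  intros He HB HK. induction n. simpl. lra.
  rewrite S_INR. cbn [ps count_upto].
  destruct (excluded_middle_informative (K (S n))) as [h|h].
  - rewrite plus_INR. simpl (INR 1). specialize (HB (S n) ltac:(lia)). lra.
  - rewrite Nat.add_0_l. specialize (HK (S n) ltac:(lia) h). lra.
Qed.

Lemma dist_nonneg {X} (rho : X -> X -> R) x B : (forall x y, 0 <= rho x y) -> 0 <= dist_set rho x B.
Proof.
  intros Hr. unfold dist_set.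
  pose proof (Glb_Rbar_correct (fun r => exists y, B y /\ r = rho x y)) as [Hlb Hglb].
  assert (Rbar_le 0 (Glb_Rbar (fun r => exists y, B y /\ r = rho x y))).
  { apply Hglb. intros r [y [_ ->]]. simpl. apply Hr. }
  destruct (Glb_Rbar _); simpl in *; lra.
Qed.

Lemma lin_lower f : (exists L : Rbar, Rbar_lt 0 L /\ is_lim (fun t => f t / t) p_infty L) ->
  exists l T, 0 < l /\ 0 <= T /\ forall t, T < t -> l * t < f t.
Proof.
  intros [L [HL Hlim]]. apply is_lim_spec in Hlim.
  destruct L as [r| |]; simpl in HL; try contradiction.
  - destruct (Hlim (mkposreal (r/2) ltac:(lra))) as [M HM].
    exists (r/2), (Rmax M 0). split; [lra|split; [apply Rmax_r|]].
    intros t Ht. assert (M < t) by (eapply Rle_lt_trans; [apply Rmax_l|exact Ht]).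
    assert (0 < t) by (eapply Rle_lt_trans; [apply Rmax_r|exact Ht]).
    specialize (HM t H). simpl in HM. apply Rabs_def2 in HM.
    assert (f t = (f t / t) * t) by (field; lra). nra.
  - destruct (Hlim 1) as [M HM].
    exists 1, (Rmax M 0). split; [lra|split; [apply Rmax_r|]].
    intros t Ht. assert (M < t) by (eapply Rle_lt_trans; [apply Rmax_l|exact Ht]).
    assert (0 < t) by (eapply Rle_lt_trans; [apply Rmax_r|exact Ht]).
    specialize (HM t H).
    assert (f t = (f t / t) * t) by (field; lra). nra.
Qed.

Lemma div_lt_iff a b d : 0 < b -> (a / b < d <-> a < d * b).
Proof. intros. apply Rlt_div_l. lra. Qed.

Lemma dens_nat_to_f f K : modulus f ->
  (exists l T, 0 < l /\ 0 <= T /\ forall t, T < t -> l * t < f t) ->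
  is_lim_seq (fun n => INR (count_upto K n) / INR n) 0 -> f_density_zero f K.
Proof.
  intros Hm [l [T [Hl [HT Hf]]]] H. unfold f_density_zero.
  rewrite lim0_spec in *. intros eps Heps.
  pose proof (mod_pos f 1 Hm ltac:(lra)) as Hf1.
  assert (0 < eps * l / f 1) by (apply Rdiv_lt_0_compat; nra).
  destruct (H _ H0) as [N HN].
  destruct (INR_unbounded T) as [N2 HN2].
  exists (max N N2). intros n Hn. specialize (HN n ltac:(lia)).
  assert (INR N2 <= INR n) by (apply le_INR; lia).
  assert (Tn : T < INR n) by lra.
  set (c := count_upto K n) in *.
  assert (Hc0 : 0 <= INR c) by apply pos_INR.
  assert (Hnpos : 0 < INR n) by lra.
  rewrite Rabs_pos_eq in HN by (apply Rdiv_le_0_compat; lra).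
  rewrite div_lt_iff in HN by lra.
  pose proof (Hf _ Tn).
  pose proof (mod_nat f Hm c).
  assert (Hfc : 0 <= f (INR c)) by (apply mod_nonneg; auto).
  assert (Hfn : 0 < f (INR n)) by nra.
  rewrite Rabs_pos_eq by (apply Rdiv_le_0_compat; lra).
  rewrite div_lt_iff by lra.
  assert (INR c * f 1 < eps * l / f 1 * INR n * f 1) by nra.
  assert (eps * l / f 1 * INR n * f 1 = eps * (l * INR n)) by (field; lra).
  nra.
Qed.

Lemma dens_f_to_nat f K : modulus f ->
  (exists l T, 0 < l /\ 0 <= T /\ forall t, T < t -> l * t < f t) ->
  f_density_zero f K -> is_lim_seq (fun n => INR (count_upto K n) / INR n) 0.
Proof.
  intros Hm [l [T [Hl [HT Hf]]]] H. unfold f_density_zero in H.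
  rewrite lim0_spec in *. intros eps Heps.
  pose proof (mod_pos f 1 Hm ltac:(lra)) as Hf1.
  assert (0 < l * eps / f 1) by (apply Rdiv_lt_0_compat; nra).
  destruct (H _ H0) as [N HN].
  destruct (INR_unbounded (T / eps + 1)) as [N2 HN2].
  exists (max N N2). intros n Hn. specialize (HN n ltac:(lia)).
  assert (INR N2 <= INR n) by (apply le_INR; lia).
  assert (0 <= T / eps) by (apply Rdiv_le_0_compat; lra).
  assert (Tn : T < eps * INR n).
  { assert (T / eps < INR n) by lra. apply div_lt_iff in H3; lra. }
  set (c := count_upto K n) in *.
  assert (Hc0 : 0 <= INR c) by apply pos_INR.
  assert (Hnpos : 0 < INR n) by lra.
  pose proof (mod_nat f Hm n).
  assert (Hfn : 0 < f (INR n)) by (apply mod_pos; auto).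
  assert (Hfc : 0 <= f (INR c)) by (apply mod_nonneg; auto).
  rewrite Rabs_pos_eq in HN by (apply Rdiv_le_0_compat; lra).
  rewrite div_lt_iff in HN by lra.
  rewrite Rabs_pos_eq by (apply Rdiv_le_0_compat; lra).
  rewrite div_lt_iff by lra.
  destruct (Rlt_or_le (INR c) (eps * INR n)) as [h|h]; [lra|exfalso].
  pose proof (Hf _ Tn).
  assert (f (eps * INR n) <= f (INR c)) by (apply mod_mono; auto; lra).
  assert (l * eps / f 1 * f (INR n) <= l * eps / f 1 * (INR n * f 1)) by
    (apply Rmult_le_compat_l; lra).
  assert (l * eps / f 1 * (INR n * f 1) = l * (eps * INR n)) by (field; lra).
  lra.
Qed.

Theorem theorem4p7 (X : Type) (rho : X -> X -> R) (A : X -> Prop)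
  (A_ : nat -> X -> Prop) (f : R -> R) (c : R) :
  is_metric rho ->
  CL rho A ->
  (forall k, (1 <= k)%nat -> CL rho (A_ k)) ->
  modulus f ->
  unbounded_fun f ->
  (exists L : Rbar, Rbar_lt 0 L /\ is_lim (fun t => f t / t) p_infty L) ->
  0 < c ->
  (forall x y, 0 <= x -> 0 <= y -> c * f x * f y <= f (x * y)) ->
  (wijsman_strong_cesaro rho f A_ A -> f_wijsman_stat_conv rho f A_ A) /\
  (wijsman_bounded rho A_ -> f_wijsman_stat_conv rho f A_ A ->
     wijsman_strong_cesaro rho f A_ A).
Proof.
  intros Hmet _ _ Hm _ HL _ _.
  pose proof (lin_lower f HL) as Hlin.
  assert (Hr : forall x y, 0 <= rho x y) by apply Hmet.
  split.
  - intros Hces x eps Heps. apply dens_nat_to_f; auto.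
    specialize (Hces x). rewrite lim0_spec in *. intros eta Heta.
    pose proof (mod_pos f eps Hm Heps) as Hfe.
    destruct (Hces (eta * f eps) ltac:(nra)) as [N HN].
    exists (max N 1). intros n Hn. specialize (HN n ltac:(lia)).
    rewrite ps_eq in HN.
    set (g := fun k => f (Rabs (dist_set rho x (A_ k) - dist_set rho x A))) in *.
    set (K := fun k => eps <= Rabs (dist_set rho x (A_ k) - dist_set rho x A)).
    pose proof (ps_lower g K (f eps) n ltac:(lra)
      ltac:(intros k _; apply mod_nonneg; auto; apply Rabs_pos)
      ltac:(intros k _ hk; apply mod_mono; auto; lra)) as Hlow.
    fold K. set (cn := count_upto K n) in *.
    assert (Hnpos : 0 < INR n) by (apply lt_0_INR; lia).
    assert (0 <= INR cn) by apply pos_INR.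
    rewrite Rabs_pos_eq in HN by (apply Rmult_le_pos; [left; apply Rinv_0_lt_compat; lra| nra]).
    rewrite Rmult_comm in HN. change (ps g n * / INR n) with (ps g n / INR n) in HN.
    rewrite div_lt_iff in HN by lra.
    rewrite Rabs_pos_eq by (apply Rdiv_le_0_compat; lra).
    rewrite div_lt_iff by lra. nra.
  - intros Hb Hst x. destruct (Hb x) as [M HM].
    set (d := dist_set rho x A).
    assert (Hd : 0 <= d) by (apply dist_nonneg; auto).
    assert (HM0 : 0 <= M) by (pose proof (HM 1%nat ltac:(lia)); pose proof (dist_nonneg rho x (A_ 1%nat) Hr); lra).
    set (B := f (M + d)).
    assert (HB : 0 <= B) by (apply mod_nonneg; auto; lra).
    apply lim0_spec. intros eps Heps.
    pose proof Hm as (_&_&_&_&Hc).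
    specialize (Hc 0 ltac:(lra)). unfold continuous in Hc.
    rewrite filterlim_locally in Hc.
    destruct (Hc (mkposreal (eps/2) ltac:(lra))) as [del Hdel].
    set (e := del / 2).
    assert (He : 0 < e) by (unfold e; pose proof (cond_pos del); lra).
    assert (Hfe : f e < eps / 2).
    { assert (ball 0 del e).
      { unfold ball; simpl; unfold AbsRing_ball, abs, minus, plus, opp; simpl.
        rewrite Ropp_0, Rplus_0_r, Rabs_pos_eq by lra. unfold e. pose proof (cond_pos del). lra. }
      specialize (Hdel e H). revert Hdel.
      unfold ball; simpl; unfold AbsRing_ball, abs, minus, plus, opp; simpl.
      rewrite Rabs_R0, (mod_zero f Hm), Ropp_0, Rplus_0_r, (Rabs_pos_eq e) by lra.
      intros h. apply Rabs_def2 in h. lra. }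
    pose proof (dens_f_to_nat f _ Hm Hlin (Hst x e He)) as Hnat.
    rewrite lim0_spec in Hnat.
    set (q := eps / (2 * (B + 1))).
    assert (Hq : 0 < q) by (unfold q; apply Rdiv_lt_0_compat; lra).
    assert (Hq2 : q * (B + 1) = eps / 2) by (unfold q; field; lra).
    destruct (Hnat q Hq) as [N HN].
    exists (max N 1). intros n Hn. specialize (HN n ltac:(lia)).
    rewrite ps_eq.
    set (g := fun k => f (Rabs (dist_set rho x (A_ k) - d))).
    set (K := fun k => e <= Rabs (dist_set rho x (A_ k) - dist_set rho x A)) in *.
    assert (Hfe0 : 0 <= f e) by (apply mod_nonneg; [exact Hm|lra]).
    pose proof (ps_upper g K B (f e) n Hfe0
      ltac:(intros k hk; unfold g, B; apply mod_mono; [exact Hm|apply Rabs_pos|];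
            pose proof (HM k hk); pose proof (dist_nonneg rho x (A_ k) Hr);
            apply Rabs_le; lra)
      ltac:(intros k _ hk; unfold g; apply mod_mono; [exact Hm|apply Rabs_pos|];
            unfold K in hk; fold d in hk; lra)) as Hup.
    pose proof (ps_lower g K 0 n ltac:(lra)
      ltac:(intros k _; apply mod_nonneg; auto; apply Rabs_pos)
      ltac:(intros k _ _; apply mod_nonneg; auto; apply Rabs_pos)) as Hlow.
    set (cn := count_upto K n) in *.
    assert (Hnpos : 0 < INR n) by (apply lt_0_INR; lia).
    assert (0 <= INR cn) by apply pos_INR.
    rewrite Rabs_pos_eq in HN by (apply Rdiv_le_0_compat; lra).
    rewrite div_lt_iff in HN by lra.
    rewrite Rmult_comm. change (ps g n * / INR n) with (ps g n / INR n).
    rewrite Rabs_pos_eq by (apply Rdiv_le_0_compat; lra).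
    rewrite div_lt_iff by lra.
    assert (B * INR cn <= B * (q * INR n)) by (apply Rmult_le_compat_l; lra).
    assert (B * q <= eps / 2) by nra.
    nra.
Qed.
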